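(* Let $S$ be a Clifford semigroup which is a strong semilattice of groups $\{G_y: y\in Y\}$ over a finite semilattice $Y$. If $S$ is left fairly amenable, then at least one of the groups $G_y$ is amenable.
   Context: A strong semilattice of groups over a semilattice $Y$ is the disjoint union $S=\bigcup_{y\in Y}G_y$ of groups, together with group homomorphisms $\phi_{y,z}:G_y\to G_z$ for $y\ge z$ (with $\phi_{y,y}$ the identity and $\phi_{z,w}\phi_{y,z}=\phi_{y,w}$), and product $ab=\phi_{y,y\wedge z}(a)\phi_{z,y\wedge z}(b)$ for $a\in G_y$, $b\in G_z$. $s$ acts injectively on the left of $A\subseteq S$ if $a\mapsto sa$ is injective on $A$. $S$ is left fairly amenable if there is $\mu:\mathcal P(S)\to[0,1]$, $\mu(S)=1$, additive on disjoint sets, with $\mu(sA)=\mu(A)$ whenever $s$ acts injectively on the left of $A$. A group $G$ is amenable if it admits a finitely-additive probability measure with $\mu(gA)=\mu(A)$ for all $g\in G$, $A\subseteq G$. *)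

(* Defs.v *)
From Stdlib Require Import Reals List.
Open Scope R_scope.
Set Implicit Arguments.

Record Group := {
  gcar :> Type;
  gmul : gcar -> gcar -> gcar;
  ginv : gcar -> gcar;
  gone : gcar;
  gmul_assoc : forall a b c, gmul a (gmul b c) = gmul (gmul a b) c;
  gmul_1l : forall a, gmul gone a = a;
  gmul_1r : forall a, gmul a gone = a;
  gmul_Vl : forall a, gmul (ginv a) a = gone;
  gmul_Vr : forall a, gmul a (ginv a) = gone
}.

Record Semilattice := {
  ycar :> Type;
  meet : ycar -> ycar -> ycar;
  meet_assoc : forall x y z, meet x (meet y z) = meet (meet x y) z;
  meet_comm : forall x y, meet x y = meet y x;
  meet_idem : forall x, meet x x = x
}.

Definition sl_le (Y : Semilattice) (z y : Y) : Prop := meet Y y z = z.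

Definition finite_type (T : Type) : Prop := exists l : list T, forall x : T, In x l.

(* phi y z : G_y -> G_z; only its values for z <= y are meaningful. *)
Record StrongSemilattice (Y : Semilattice) := {
  grp : Y -> Group;
  phi : forall y z : Y, grp y -> grp z;
  phi_id : forall y (a : grp y), phi y y a = a;
  phi_comp : forall (y z w : Y) (a : grp y), @sl_le Y z y -> @sl_le Y w z ->
      phi z w (phi y z a) = phi y w a;
  phi_hom : forall (y z : Y) (a b : grp y), @sl_le Y z y ->
      phi y z (gmul (grp y) a b) = gmul (grp z) (phi y z a) (phi y z b)
}.

(* The Clifford semigroup S = disjoint union of the G_y *)
Definition ss_car (Y : Semilattice) (S : StrongSemilattice Y) : Type :=
  { y : Y & grp S y }.

Definition ss_mul (Y : Semilattice) (S : StrongSemilattice Y)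
  (s t : ss_car S) : ss_car S :=
  let y := projT1 s in let z := projT1 t in
  existT _ (meet Y y z)
    (gmul (grp S (meet Y y z)) (phi S y (meet Y y z) (projT2 s))
                               (phi S z (meet Y y z) (projT2 t))).

Definition disjoint (T : Type) (A B : T -> Prop) : Prop := forall x, ~ (A x /\ B x).
Definition setU (T : Type) (A B : T -> Prop) : T -> Prop := fun x => A x \/ B x.
Definition setT (T : Type) : T -> Prop := fun _ => True.

Definition fa_prob (T : Type) (mu : (T -> Prop) -> R) : Prop :=
  (forall A, 0 <= mu A <= 1) /\
  mu (@setT T) = 1 /\
  (forall A B, disjoint A B -> mu (setU A B) = mu A + mu B).

Definition ltrans (T : Type) (mul : T -> T -> T) (s : T) (A : T -> Prop) : T -> Prop :=
  fun x => exists a, A a /\ x = mul s a.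

Definition acts_inj_left (T : Type) (mul : T -> T -> T) (s : T) (A : T -> Prop) : Prop :=
  forall a b, A a -> A b -> mul s a = mul s b -> a = b.

Definition amenable (G : Group) : Prop :=
  exists mu : (G -> Prop) -> R, fa_prob mu /\
    forall (g : G) (A : G -> Prop), mu (ltrans (gmul G) g A) = mu A.

Definition left_fairly_amenable (Y : Semilattice) (S : StrongSemilattice Y) : Prop :=
  exists mu : (ss_car S -> Prop) -> R, fa_prob mu /\
    forall (s : ss_car S) (A : ss_car S -> Prop),
      acts_inj_left (@ss_mul Y S) s A -> mu (ltrans (@ss_mul Y S) s A) = mu A.

(* Main.v *)
Require Import Defs.
From Stdlib Require Import Reals List Lra Classical FunctionalExtensionality PropExtensionality Eqdep.

Lemma set_ext (T : Type) (A B : T -> Prop) : (forall x, A x <-> B x) -> A = B.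
Proof.
  intro H; apply functional_extensionality; intro x; apply propositional_extensionality; auto.
Qed.

Lemma mu_mono (T : Type) (mu : (T -> Prop) -> R) : fa_prob mu ->
  forall A B : T -> Prop, (forall x, A x -> B x) -> mu A <= mu B.
Proof.
  intros [H0 [H1 H2]] A B HAB.
  assert (E : B = setU A (fun x => B x /\ ~ A x)).
  { apply set_ext; intro x; unfold setU; split.
    - intro Hb; destruct (classic (A x)); auto.
    - intros [Ha|[Hb _]]; auto. }
  rewrite E, H2. specialize (H0 (fun x => B x /\ ~ A x)); lra.
  intros x [Ha [_ Hn]]; auto.
Qed.

Arguments mu_mono {T mu}.

Lemma cover_pos (Y : Semilattice) (S : StrongSemilattice Y) (mu : (ss_car S -> Prop) -> R) :
  fa_prob mu -> finite_type Y -> exists y, 0 < mu (fun s => projT1 s = y).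
Proof.
  intros Hmu [l Hl].
  destruct (classic (exists y, 0 < mu (fun s => projT1 s = y))) as [H|H]; auto.
  exfalso.
  assert (Z : forall y, mu (fun s => projT1 s = y) = 0).
  { intro y. destruct Hmu as [H0 _]. specialize (H0 (fun s => projT1 s = y)).
    destruct (Rle_lt_or_eq_dec 0 _ (proj1 H0)); auto. exfalso; eauto. }
  assert (U : forall l', mu (fun s => In (projT1 s) l') = 0).
  { induction l' as [|y l' IH].
    - destruct Hmu as [_ [_ H2]].
      set (E0 := fun s : ss_car S => In (projT1 s) nil).
      assert (D : disjoint E0 E0) by (intros s [h _]; exact h).
      pose proof (H2 _ _ D) as H3.
      assert (E : setU E0 E0 = E0) by (apply set_ext; unfold setU; tauto).
      rewrite E in H3. lra.
    - assert (E : (fun s : ss_car S => In (projT1 s) (y :: l')) =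
                  setU (fun s => projT1 s = y) (fun s => In (projT1 s) l' /\ ~ projT1 s = y)).
      { apply set_ext; intro s; unfold setU; simpl.
        destruct (classic (projT1 s = y)); split; intros; intuition. }
      rewrite E. destruct Hmu as [H0 [H1 H2]]. rewrite H2.
      2:{ intros s [a [_ b]]; auto. }
      rewrite Z. pose proof (mu_mono (conj H0 (conj H1 H2)) (fun s : ss_car S => In (projT1 s) l' /\ projT1 s <> y) (fun s => In (projT1 s) l')).
      specialize (H0 (fun s : ss_car S => In (projT1 s) l' /\ projT1 s <> y)).
      assert (mu (fun s : ss_car S => In (projT1 s) l' /\ projT1 s <> y) <= mu (fun s => In (projT1 s) l')) by (apply H3; tauto). unfold ss_car in *; lra. }
  specialize (U l). destruct Hmu as [_ [H1 _]].
  assert (E : (fun s : ss_car S => In (projT1 s) l) = @setT _) by (apply set_ext; unfold setT; intuition).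
  rewrite E in U; lra.
Qed.

Arguments cover_pos {Y S mu}.

Lemma mul_same (Y : Semilattice) (S : StrongSemilattice Y) (y : Y) (g b : grp S y) :
  ss_mul (existT _ y g) (existT _ y b) = existT _ y (gmul (grp S y) g b).
Proof.
  unfold ss_mul; simpl.
  generalize (meet_idem Y y). generalize (meet Y y y). intros m ->.
  rewrite !phi_id; reflexivity.
Qed.

Theorem mainTheorem15 (Y : Semilattice) (HY : finite_type Y)
  (S : StrongSemilattice Y) (HS : left_fairly_amenable S) :
  exists y : Y, amenable (grp S y).
Proof.
  destruct HS as [mu [Hmu Hinv]].
  destruct (cover_pos Hmu HY) as [y Hy].
  exists y.
  set (Em := fun B : grp S y -> Prop => fun s : ss_car S => exists b, B b /\ s = existT _ y b).
  set (c := mu (fun s : ss_car S => projT1 s = y)).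
  assert (Hc : 0 < c) by exact Hy.
  assert (Ec : Em (@setT _) = (fun s : ss_car S => projT1 s = y)).
  { apply set_ext; intros [z b]; unfold Em, setT; simpl; split.
    - intros [b' [_ e]]. inversion e; auto.
    - intros ->. exists b; auto. }
  exists (fun B => mu (Em B) / c).
  assert (Hmono := mu_mono Hmu).
  destruct Hmu as [H0 [H1 H2]].
  split; [split; [|split]|].
  - intro A. assert (mu (Em A) <= c).
    { unfold c; rewrite <- Ec. apply Hmono. intros s [b [_ e]]; exists b; unfold setT; auto. }
    specialize (H0 (Em A)). split.
    + unfold Rdiv. apply Rmult_le_pos. lra. left; apply Rinv_0_lt_compat; lra.
    + apply (Rmult_le_reg_r c); [lra|]. unfold Rdiv. rewrite Rmult_assoc, Rinv_l; lra.
  - rewrite Ec. fold c. field. lra.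
  - intros A B HAB.
    assert (E : Em (setU A B) = setU (Em A) (Em B)).
    { apply set_ext; intro s; unfold Em, setU; split.
      - intros [b [[Ha|Hb] e]]; [left|right]; eauto.
      - intros [[b [Ha e]]|[b [Hb e]]]; eauto. }
    rewrite E, H2. field. lra.
    intros s [[a [Ha ea]] [b [Hb eb]]]. subst s.
    apply inj_pair2 in eb. subst b. apply (HAB a); auto.
  - intros g A.
    assert (E : ltrans (@ss_mul Y S) (existT _ y g) (Em A) = Em (ltrans (gmul (grp S y)) g A)).
    { apply set_ext; intro s; unfold Em, ltrans; split.
      - intros [a [[b [Hb ->]] ->]]. rewrite mul_same. eauto.
      - intros [b [[a [Ha ->]] ->]]. exists (existT _ y a). rewrite mul_same; eauto. }
    rewrite <- E, Hinv; auto.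
    intros a b [a' [Ha ->]] [b' [Hb ->]]. rewrite !mul_same. intro e.
    apply inj_pair2 in e.
    assert (a' = b').
    { rewrite <- (gmul_1l (grp S y) a'), <- (gmul_1l (grp S y) b'), <- (gmul_Vl (grp S y) g),
        <- !gmul_assoc, e; auto. }
    subst; auto.
Qed.
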